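(* The Grötzsch graph $M(C_5)$ has odd girth $5$ and admits an orientation in which every $5$-cycle (i.e., every shortest odd cycle) is alternating.
   Context: For a graph $G$, the Mycielskian $M(G)$ has vertex set $\{(v,0),(v,1):v\in V(G)\}\cup\{z\}$, with $(u,i)$ adjacent to $(v,j)$ iff $\{u,v\}\in E(G)$ and ($|i-j|=1$ or $i=j=0$), and $z$ adjacent to every $(v,1)$. The Grötzsch graph is $M(C_5)$. The odd girth is the length of a shortest odd cycle. An orientation assigns each edge exactly one direction. In an oriented graph, a subgraph that is a cycle is called alternating if at most one of its vertices has both positive in-degree and positive out-degree within that cycle. *)

(* Defs.v *)
From mathcomp Require Import all_boot.
Set Implicit Arguments. Unset Strict Implicit. Unset Printing Implicit Defensive.

(* A simple graph is a symmetric irreflexive relation on a finite type. *)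

Definition C5 : rel 'I_5 :=
  fun i j => (j == i.+1 %% 5 :> nat) || (i == j.+1 %% 5 :> nat).

(* Mycielskian: vertex (v,i) is Some (v, b) with b = false for i = 0 and
   b = true for i = 1; the extra vertex z is None. *)
Definition myc_vertex (T : finType) := option (T * bool).

Definition mycielskian (T : finType) (e : rel T) : rel (myc_vertex T) :=
  fun x y =>
    match x, y with
    | Some (u, i), Some (v, j) => e u v && ((i != j) || (~~ i && ~~ j))
    | None, Some (_, j) => j
    | Some (_, i), None => i
    | None, None => false
    end.

Definition grotzsch : rel (myc_vertex 'I_5) := mycielskian C5.

Definition is_graph_cycle (V : finType) (e : rel V) (s : seq V) : Prop :=
  [/\ uniq s, 3 <= size s & cycle e s].

Definition odd_girth (V : finType) (e : rel V) (k : nat) : Prop :=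
  (exists s, is_graph_cycle e s /\ odd (size s) /\ size s = k) /\
  (forall s, is_graph_cycle e s -> odd (size s) -> k <= size s).

(* An orientation: o x y means the edge {x,y} is directed x -> y; each edge
   gets exactly one direction and only edges get directions. *)
Definition is_orientation (V : finType) (e : rel V) (o : rel V) : Prop :=
  (forall x y, o x y -> e x y) /\
  (forall x y, e x y -> o x y != o y x).

(* Vertex v of cycle s has positive in- and out-degree within the cycle,
   whose edges at v are {prev s v, v} and {v, next s v}. *)
Definition cycle_inout (V : finType) (o : rel V) (s : seq V) (v : V) : bool :=
  (o (prev s v) v || o (next s v) v) && (o v (prev s v) || o v (next s v)).

Definition alternating (V : finType) (o : rel V) (s : seq V) : Prop :=
  count (cycle_inout o s) s <= 1.

(* Main.v *)
Require Import Defs.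
From mathcomp Require Import all_boot.

Definition vidx (x : myc_vertex 'I_5) : nat :=
  match x with None => 0 | Some (u, b) => (1 + 2 * u + b)%N end.

Definition olist : seq (nat * nat) :=
  [:: (0, 2); (0, 4); (0, 6); (0, 8); (3, 1); (3, 2); (3, 6); (4, 1); (5, 3); (5, 4);
      (5, 7); (5, 8); (7, 6); (9, 1); (9, 2); (9, 7); (9, 8); (10, 0); (10, 1); (10, 7)].

Definition orient : rel (myc_vertex 'I_5) := fun x y => (vidx x, vidx y) \in olist.

Definition VV : seq (myc_vertex 'I_5) := [:: None; Some (@Ordinal 5 0 isT, false); Some (@Ordinal 5 0 isT, true); Some (@Ordinal 5 1 isT, false); Some (@Ordinal 5 1 isT, true); Some (@Ordinal 5 2 isT, false); Some (@Ordinal 5 2 isT, true); Some (@Ordinal 5 3 isT, false); Some (@Ordinal 5 3 isT, true); Some (@Ordinal 5 4 isT, false); Some (@Ordinal 5 4 isT, true)].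

Lemma orient_ok : all (fun x => all (fun y =>
   (orient x y ==> grotzsch x y) && (grotzsch x y ==> (orient x y != orient y x))) VV) VV.
Proof. vm_compute. reflexivity. Qed.

Lemma no_tri : all (fun a => all (fun b => grotzsch a b ==> all (fun c =>
   grotzsch b c ==> ~~ grotzsch c a) VV) VV) VV.
Proof. vm_compute. reflexivity. Qed.

Lemma five_ok : all (fun a => all (fun b => grotzsch a b ==> all (fun c =>
   grotzsch b c ==> all (fun d => grotzsch c d ==> all (fun f =>
   grotzsch d f ==> grotzsch f a ==> uniq [:: a; b; c; d; f] ==>
   (count (cycle_inout orient [:: a; b; c; d; f]) [:: a; b; c; d; f] <= 1)) VV) VV) VV) VV) VV.
Proof. vm_compute. reflexivity. Qed.

Lemma inVV x : x \in VV.
Proof. case: x => [[[[|[|[|[|[|u]]]]] Hu] [|]]|] //; by rewrite ?(eq_irrelevance Hu isT). Qed.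

Lemma allV (p : pred (myc_vertex 'I_5)) : all p VV -> forall x, p x.
Proof. by move=> /allP H x; apply: H; apply: inVV. Qed.

Theorem mainTheorem13 :
  odd_girth grotzsch 5 /\
  exists o : rel (myc_vertex 'I_5),
    is_orientation grotzsch o /\
    forall s : seq (myc_vertex 'I_5),
      is_graph_cycle grotzsch s -> size s = 5 -> alternating o s.
Proof.
split; [split|].
- exists [:: Some (@Ordinal 5 0 isT, false); Some (@Ordinal 5 1 isT, false); Some (@Ordinal 5 2 isT, false);
            Some (@Ordinal 5 3 isT, false); Some (@Ordinal 5 4 isT, false)].
  split; [split; [vm_compute; reflexivity|by []|vm_compute; reflexivity]|by []].
- move=> s [Hu H3 Hc] Ho.
  case: s Hu H3 Hc Ho => [|a [|b [|c [|d [|f t]]]]] //= Hu _ Hc Ho.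
  + move/and4P: Hc => [Hab Hbc Hca _].
    have := @allV _ no_tri a.
    move/allV/(_ b); rewrite Hab ?implyTb.
    by move/allV/(_ c); rewrite Hbc Hca.
- exists orient; split; first split.
  + move=> x y Hxy.
    have := @allV _ orient_ok x.
    by move/allV/(_ y); rewrite Hxy /= => /andP[].
  + move=> x y Hxy.
    have := @allV _ orient_ok x.
    by move/allV/(_ y); rewrite Hxy /= => /andP[_].
  + move=> s [Hu _ Hc] Hs.
    case: s Hu Hc Hs => [|a [|b [|c [|d [|f [|g t]]]]]] //= Hu Hc _.
    rewrite /alternating.
    move: Hc; rewrite /= => /and5P[Hab Hbc Hcd Hdf /andP[Hfa _]].
    have := @allV _ five_ok a.
    move/allV/(_ b); rewrite Hab ?implyTb.
    move/allV/(_ c); rewrite Hbc ?implyTb.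
    move/allV/(_ d); rewrite Hcd ?implyTb.
    move/allV/(_ f); rewrite Hdf Hfa ?implyTb.
    by move/implyP/(_ Hu).
Qed.
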